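(* $$\{\varphi\in\mathrm{End}_K(P_n)\mid [x_1,\varphi]\in F_n,\dots,[x_n,\varphi]\in F_n\}=\begin{cases}\mathbb{S}_1 & n=1,\\ P_n+F_n & n>1,\end{cases}$$ where $P_n=K[x_1,\dots,x_n]\subset\mathbb{S}_n$.
   Context: $K$ is a field of characteristic zero. $\mathbb{S}_n$ is the $K$-algebra generated by $x_1,\dots,x_n,y_1,\dots,y_n$ with defining relations $y_ix_i=1$ and $[x_i,y_j]=[x_i,x_j]=[y_i,y_j]=0$ for $i\ne j$; it acts faithfully on $P_n=K[x_1,\dots,x_n]$ by $x_i*x^\alpha=x^{\alpha+e_i}$, $y_i*x^\alpha=x^{\alpha-e_i}$ if $\alpha_i>0$ and $0$ otherwise, so $\mathbb{S}_n\subset\mathrm{End}_K(P_n)$. For $k,l\in\mathbb{N}$, $E_{kl}(i):=x_i^ky_i^l-x_i^{k+1}y_i^{l+1}$; for $\alpha,\beta\in\mathbb{N}^n$, $E_{\alpha\beta}:=\prod_{i=1}^nE_{\alpha_i\beta_i}(i)$ (so $E_{\alpha\beta}*x^\gamma=\delta_{\beta\gamma}x^\alpha$), and $F_n:=\bigoplus_{\alpha,\beta\in\mathbb{N}^n}KE_{\alpha\beta}$. *)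

(* Defs.v *)
From HB Require Import structures.
From mathcomp Require Import all_boot all_order all_algebra.
Set Implicit Arguments. Unset Strict Implicit. Unset Printing Implicit Defensive.
Import Order.TTheory GRing.Theory Num.Theory.
Local Open Scope ring_scope.

(* Exponent vectors alpha in N^n (monomials x^alpha). *)
Definition mono (n : nat) := {ffun 'I_n -> nat}.

(* alpha + e_i  and  alpha - e_i (truncated) *)
Definition up n (i : 'I_n) (a : mono n) : mono n := [ffun j => (a j + (j == i))%N].
Definition down n (i : 'I_n) (a : mono n) : mono n := [ffun j => (a j - (j == i))%N].

Definition finsupp (K : fieldType) n (c : mono n -> K) : Prop :=
  exists s : seq (mono n), forall a, c a != 0 -> a \in s.

(* P_n = K[x_1,...,x_n], represented by coefficient families of finite support;
   the element p is sum_alpha (sval p alpha) x^alpha. *)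
Definition P (K : fieldType) n := {c : mono n -> K | finsupp c}.

Lemma finsupp0 (K : fieldType) n : finsupp (fun _ : mono n => (0 : K)).
Proof. by exists [::] => a; rewrite eqxx. Qed.

Lemma finsupp_add (K : fieldType) n (c d : mono n -> K) :
  finsupp c -> finsupp d -> finsupp (fun a => c a + d a).
Proof.
move=> [s Hs] [t Ht]; exists (s ++ t) => a H; rewrite mem_cat.
case: (eqVneq (c a) 0) => [Hc|Hc]; last by rewrite Hs.
by move: H; rewrite Hc add0r => /Ht ->; rewrite orbT.
Qed.

Lemma finsupp_scale (K : fieldType) n (k : K) (c : mono n -> K) :
  finsupp c -> finsupp (fun a => k * c a).
Proof.
move=> [s Hs]; exists s => a H; apply: Hs; move: H; apply: contra => /eqP ->.
by rewrite mulr0.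
Qed.

Lemma finsupp_x (K : fieldType) n (i : 'I_n) (c : mono n -> K) :
  finsupp c -> finsupp (fun a => if (0 < a i)%N then c (down i a) else 0).
Proof.
move=> [s Hs]; exists (map (up i) s) => a; case: ifP => [Hpos H|]; last by rewrite eqxx.
apply/mapP; exists (down i a); first exact: Hs.
apply/ffunP => j; rewrite !ffunE; case: (eqVneq j i) => [->|] /=.
  by rewrite addn1 subn1 prednK.
by rewrite addn0 subn0.
Qed.

Lemma finsupp_y (K : fieldType) n (i : 'I_n) (c : mono n -> K) :
  finsupp c -> finsupp (fun a => c (up i a)).
Proof.
move=> [s Hs]; exists (map (down i) s) => a H; apply/mapP; exists (up i a).
  exact: Hs.
by apply/ffunP => j; rewrite !ffunE addnK.
Qed.

Definition P0 (K : fieldType) n : P K n := exist _ _ (@finsupp0 K n).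
Definition Padd (K : fieldType) n (p q : P K n) : P K n :=
  exist _ _ (finsupp_add (proj2_sig p) (proj2_sig q)).
Definition Pscale (K : fieldType) n (k : K) (p : P K n) : P K n :=
  exist _ _ (finsupp_scale k (proj2_sig p)).

Definition isLinEnd (K : fieldType) n (phi : P K n -> P K n) : Prop :=
  (forall p q, phi (Padd p q) = Padd (phi p) (phi q)) /\
  (forall k p, phi (Pscale k p) = Pscale k (phi p)).

(* The operators x_i and y_i acting on P_n:
   x_i * x^alpha = x^(alpha+e_i), y_i * x^alpha = x^(alpha-e_i) if alpha_i>0, else 0. *)
Definition xop (K : fieldType) n (i : 'I_n) (p : P K n) : P K n :=
  exist _ _ (finsupp_x i (proj2_sig p)).
Definition yop (K : fieldType) n (i : 'I_n) (p : P K n) : P K n :=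
  exist _ _ (finsupp_y i (proj2_sig p)).

Definition fzero (K : fieldType) n : P K n -> P K n := fun _ => @P0 K n.
Definition fadd (K : fieldType) n (f g : P K n -> P K n) : P K n -> P K n :=
  fun p => Padd (f p) (g p).
Definition fscale (K : fieldType) n (k : K) (f : P K n -> P K n) : P K n -> P K n :=
  fun p => Pscale k (f p).
Definition fsub (K : fieldType) n (f g : P K n -> P K n) : P K n -> P K n :=
  fadd f (fscale (-1) g).
Definition fpow (K : fieldType) n (f : P K n -> P K n) (k : nat) : P K n -> P K n :=
  iter k (fun h => f \o h) id.

Definition comm (K : fieldType) n (a b : P K n -> P K n) : P K n -> P K n :=
  fsub (a \o b) (b \o a).

Definition Ekl (K : fieldType) n (k l : nat) (i : 'I_n) : P K n -> P K n :=
  fsub (fpow (xop i) k \o fpow (yop i) l) (fpow (xop i) k.+1 \o fpow (yop i) l.+1).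

Definition Eab (K : fieldType) n (a b : mono n) : P K n -> P K n :=
  foldr (fun i acc => @Ekl K n (a i) (b i) i \o acc) id (enum 'I_n).

Definition inF (K : fieldType) n (psi : P K n -> P K n) : Prop :=
  exists s : seq (mono n * mono n * K),
    psi = foldr (fun t acc => fadd (fscale t.2 (@Eab K n t.1.1 t.1.2)) acc) (@fzero K n) s.

Inductive alg_gen (K : fieldType) n (G : (P K n -> P K n) -> Prop) :
    (P K n -> P K n) -> Prop :=
| ag_gen f : G f -> alg_gen G f
| ag_id : alg_gen G id
| ag_add f g : alg_gen G f -> alg_gen G g -> alg_gen G (fadd f g)
| ag_scale k f : alg_gen G f -> alg_gen G (fscale k f)
| ag_comp f g : alg_gen G f -> alg_gen G g -> alg_gen G (f \o g).

Definition inS (K : fieldType) n (phi : P K n -> P K n) : Prop :=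
  alg_gen (fun f => exists i : 'I_n, f = xop i \/ f = yop i) phi.

Definition inPn (K : fieldType) n (phi : P K n -> P K n) : Prop :=
  alg_gen (fun f => exists i : 'I_n, f = xop i) phi.

Definition inPF (K : fieldType) n (phi : P K n -> P K n) : Prop :=
  exists p f, inPn p /\ inF f /\ phi = fadd p f.

(* Main.v *)
Require Import Defs.
From HB Require Import structures.
From mathcomp Require Import all_boot all_order all_algebra.
From Stdlib Require Import Lia FunctionalExtensionality ProofIrrelevance Classical.
Set Implicit Arguments. Unset Strict Implicit. Unset Printing Implicit Defensive.
Import GRing.Theory.
Local Open Scope ring_scope.

Ltac nlia := intros; repeat match goal with
  | H : is_true (_ <= _)%N |- _ => move/leP: H => H
  | H : is_true (~~ (_ <= _)%N) |- _ => move/negP: H => H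
  | H : ~ is_true (_ <= _)%N |- _ => let H' := fresh in assert (H' : ~ (le _ _)) by (move=> /leP; exact: H); clear H
  | |- is_true (_ <= _)%N => apply/leP
  | |- is_true (~~ (_ <= _)%N) => apply/negP; let H := fresh in move=> /leP H
  end; unfold addn, addn_rec, subn, subn_rec in *; lia.

Section Basics.
Variable K : fieldType.
Variable n : nat.
Notation PK := (P K n).
Notation op := (PK -> PK).

Definition co (p : PK) (a : mono n) : K := sval p a.

Lemma Peq (p q : PK) : (forall a, co p a = co q a) -> p = q.
Proof.
move: p q => [c hc] [d hd] /= H.
have E : c = d by apply: functional_extensionality.
subst d; by rewrite (proof_irrelevance _ hc hd).
Qed.

Lemma coadd p q a : co (Padd p q) a = co p a + co q a. Proof. by []. Qed.
Lemma coscale k p a : co (Pscale k p) a = k * co p a. Proof. by []. Qed.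
Lemma co0 a : co (P0 K n) a = 0. Proof. by []. Qed.
Lemma cox i p a : co (xop i p) a = if (0 < a i)%N then co p (down i a) else 0.
Proof. by []. Qed.
Lemma coy i p a : co (yop i p) a = co p (up i a). Proof. by []. Qed.

Lemma finsupp_mon (g : mono n) : finsupp (fun a : mono n => if a == g then (1 : K) else 0).
Proof. exists [:: g] => a; rewrite inE; by case: (a == g); rewrite ?eqxx. Qed.
Definition mon g : PK := exist _ _ (finsupp_mon g).
Lemma comon g a : co (mon g) a = if a == g then 1 else 0. Proof. by []. Qed.

End Basics.

Section Mono.
Variable n : nat.
Implicit Types a b g d : mono n.

Definition addm a b : mono n := [ffun j => (a j + b j)%N].
Definition subm a b : mono n := [ffun j => (a j - b j)%N].
Definition lem a b : bool := [forall j, (a j <= b j)%N].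
Definition ee (i : 'I_n) (k : nat) : mono n := [ffun j => if j == i then k else 0%N].

Lemma lemP a b : reflect (forall j, (a j <= b j)%N) (lem a b).
Proof. exact: forallP. Qed.

Lemma monoP a b : (forall j, a j = b j) -> a = b.
Proof. by move=> H; apply/ffunP. Qed.

Lemma down_up i g : down i (up i g) = g.
Proof. apply: monoP => j; rewrite !ffunE; nlia. Qed.
Lemma up_down i a : (0 < a i)%N -> up i (down i a) = a.
Proof. move=> H; apply: monoP => j; rewrite !ffunE; case: (eqVneq j i) => [->|_] /=; nlia. Qed.

Lemma upE i a g : (a == up i g) = (0 < a i)%N && (down i a == g).
Proof.
apply/eqP/andP => [->|[H /eqP <-]]; last by rewrite up_down.
by rewrite down_up ffunE eqxx addn1.
Qed.

Lemma up_comm i j g : up i (up j g) = up j (up i g).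
Proof. apply: monoP => k; rewrite !ffunE; nlia. Qed.

End Mono.

Section Lin.
Variable K : fieldType.
Variable n : nat.
Notation PK := (P K n).
Notation op := (PK -> PK).
Implicit Types f g h : op.

Lemma lin_x i : isLinEnd (@xop K n i).
Proof.
split=> [p q|k p]; apply: Peq => a; rewrite ?coadd ?coscale !cox ?coadd ?coscale;
  by case: ifP; rewrite ?addr0 ?mulr0.
Qed.
Lemma lin_y i : isLinEnd (@yop K n i).
Proof. by split=> [p q|k p]; apply: Peq => a. Qed.
Lemma lin_id : isLinEnd (@id PK).
Proof. by []. Qed.
Lemma lin_add f g : isLinEnd f -> isLinEnd g -> isLinEnd (fadd f g).
Proof.
move=> [f1 f2] [g1 g2]; split=> [p q|k p]; rewrite /fadd ?f1 ?g1 ?f2 ?g2;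
  apply: Peq => a; rewrite !coadd ?coscale ?coadd.
  by rewrite addrACA.
by rewrite mulrDr.
Qed.
Lemma lin_scale k f : isLinEnd f -> isLinEnd (fscale k f).
Proof.
move=> [f1 f2]; split=> [p q|c p]; rewrite /fscale ?f1 ?f2;
  apply: Peq => a; rewrite ?coadd !coscale ?coadd ?coscale.
  by rewrite mulrDr.
by rewrite !mulrA (mulrC k).
Qed.
Lemma lin_comp f g : isLinEnd f -> isLinEnd g -> isLinEnd (f \o g).
Proof. move=> [f1 f2] [g1 g2]; split=> [p q|c p] /=; by rewrite ?g1 ?f1 ?g2 ?f2. Qed.

Lemma lin_gen (G : op -> Prop) f : (forall g, G g -> isLinEnd g) -> alg_gen G f -> isLinEnd f.
Proof.
move=> HG; elim=> {f} [f /HG //| |f g _ Hf _ Hg|k f _ Hf|f g _ Hf _ Hg].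
- exact: lin_id.
- exact: lin_add.
- exact: lin_scale.
- exact: lin_comp.
Qed.

Lemma linS f : inS f -> isLinEnd f.
Proof. apply: lin_gen => g [i [->|->]]; [exact: lin_x|exact: lin_y]. Qed.
Lemma linPn f : inPn f -> isLinEnd f.
Proof. apply: lin_gen => g [i ->]; exact: lin_x. Qed.

Lemma lin0 f : isLinEnd f -> f (P0 K n) = P0 K n.
Proof.
move=> [_ f2]; have E : P0 K n = Pscale 0 (P0 K n) by apply: Peq => a; rewrite coscale mul0r.
by rewrite E f2; apply: Peq => a; rewrite !coscale !mul0r.
Qed.

Lemma lin_ext f g : isLinEnd f -> isLinEnd g -> (forall c, f (mon K c) = g (mon K c)) -> f = g.
Proof.
move=> Lf Lg H; apply: functional_extensionality => p.
case: (proj2_sig p) => s; elim: s p => [|b s IH] p Hs.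
  have -> : p = P0 K n.
    by apply: Peq => a; rewrite co0; apply/eqP; apply: contraT => /Hs.
  by rewrite !lin0.
pose p' := Padd p (Pscale (- co p b) (mon K b)).
have E : p = Padd (Pscale (co p b) (mon K b)) p'.
  apply: Peq => a; rewrite !coadd !coscale comon.
  by case: (a == b); rewrite ?mulr1 ?mulr0 ?add0r ?addr0 // addrCA subrr addr0.
have Hs' : forall a, sval p' a != 0 -> a \in s.
  move=> a; rewrite -/(co p' a) coadd coscale comon.
  case: (eqVneq a b) => [->|Hab]; first by rewrite mulr1 subrr eqxx.
  rewrite mulr0 addr0 => /Hs; rewrite inE; case/orP => // /eqP E'; by rewrite E' eqxx in Hab.
case: Lf => [f1 f2]; case: Lg => [g1 g2].
by rewrite E f1 g1 f2 g2 H (IH p' Hs').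
Qed.

End Lin.

Section MonAct.
Variable K : fieldType.
Variable n : nat.
Notation PK := (P K n).
Notation op := (PK -> PK).
Implicit Types f g h : op.
Implicit Types a b c : mono n.
Notation mon := (@mon K n).
Notation P0 := (P0 K n).

Definition setm (i : 'I_n) k c : mono n := [ffun j => if j == i then k else c j].

Lemma x_mon i c : xop i (mon c) = mon (up i c).
Proof. apply: Peq => a; rewrite cox !comon upE; by case: ifP. Qed.

Lemma y_mon i c : yop i (mon c) = if (0 < c i)%N then mon (down i c) else P0.
Proof.
case: ifP => H; apply: Peq => a; rewrite coy !comon ?co0.
  by rewrite eq_sym upE H /= eq_sym.
case: eqP => // E; move: H; by rewrite -E ffunE eqxx addn1.
Qed.

Lemma lin_fpow f k : isLinEnd f -> isLinEnd (fpow f k).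
Proof. move=> Lf; elim: k => [|k IH] /=; [exact: lin_id | exact: lin_comp]. Qed.

Lemma compE (f g : op) p : (f \o g) p = f (g p). Proof. by []. Qed.

Lemma fpowS f k : fpow f k.+1 = f \o fpow f k. Proof. by []. Qed.

Lemma xpow_mon i k c : fpow (xop i) k (mon c) = mon (addm c (ee i k)).
Proof.
elim: k => [|k IH]; rewrite ?fpowS /= ?IH ?x_mon; congr mon; apply: monoP => j;
 rewrite !ffunE //; case: (j == i) => /=; nlia.
Qed.

Lemma ypow_mon i l c : fpow (yop i) l (mon c) =
   if (l <= c i)%N then mon (subm c (ee i l)) else P0.
Proof.
elim: l => [|l IH]; rewrite ?fpowS /=.
  by congr mon; apply: monoP => j; rewrite !ffunE; case: (j == i) => /=; nlia.
rewrite IH; case: (leqP l (c i)) => H.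
  rewrite y_mon !ffunE eqxx; case: (leqP l.+1 (c i)) => H2.
    have -> : (0 < c i - l)%N by nlia.
    by congr mon; apply: monoP => j; rewrite !ffunE; case: (eqVneq j i) => [->|] /=; nlia.
  have -> : (0 < c i - l)%N = false by apply/negbTE; nlia.
  by [].
have -> : (l < c i)%N = false by apply/negbTE; nlia.
apply: lin0; exact: lin_y.
Qed.

Lemma lin_Ekl k l i : isLinEnd (@Ekl K n k l i).
Proof.
apply: lin_add; last apply: lin_scale; apply: lin_comp; apply: lin_fpow;
  (exact: lin_x || exact: lin_y).
Qed.

Lemma Ekl_mon k l i c : Ekl k l i (mon c) = if c i == l then mon (setm i k c) else P0.
Proof.
rewrite /Ekl /fsub /fadd /fscale !compE !ypow_mon.
case: (ltngtP l (c i)) => H.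
- rewrite !xpow_mon.
  have -> : addm (subm c (ee i l)) (ee i k) = addm (subm c (ee i l.+1)) (ee i k.+1).
    by apply: monoP => j; rewrite !ffunE; case: (eqVneq j i) => [->|] /=; nlia.
  by apply: Peq => a; rewrite coadd coscale co0 mulN1r subrr.
- rewrite !(lin0 (lin_fpow _ (@lin_x K n i))).
  by apply: Peq => a; rewrite coadd coscale co0 mulr0 addr0.
- rewrite (lin0 (lin_fpow _ (@lin_x K n i))) xpow_mon.
  have -> : addm (subm c (ee i l)) (ee i k) = setm i k c.
    by apply: monoP => j; rewrite !ffunE; case: (eqVneq j i) => [->|] /=; nlia.
  by apply: Peq => a; rewrite coadd coscale co0 mulr0 addr0.
Qed.

Lemma lin_Eab a b : isLinEnd (@Eab K n a b).
Proof.
rewrite /Eab; elim: (enum 'I_n) => [|i L IH] /=; [exact: lin_id|apply: lin_comp => //; exact: lin_Ekl].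
Qed.

Lemma Eab_mon a b c : Eab a b (mon c) = if c == b then mon a else P0.
Proof.
have gen : forall L : seq 'I_n, uniq L ->
  foldr (fun i acc => @Ekl K n (a i) (b i) i \o acc) id L (mon c) =
  if all (fun i => c i == b i) L then mon [ffun j => if j \in L then a j else c j] else P0.
  elim=> [|i L IH] /=.
    by move=> _; congr mon; apply: monoP => j; rewrite ffunE.
  case/andP=> HiL HL; rewrite IH //.
  case: (boolP (all _ L)) => HA; last first.
    rewrite andbF; apply: lin0; exact: lin_Ekl.
  rewrite Ekl_mon ffunE (negbTE HiL) andbT.
  case: ifP => // _; congr mon; apply: monoP => j; rewrite !ffunE inE.
  by case: (eqVneq j i) => [->|] //=.
rewrite /Eab gen ?enum_uniq //.
have -> : all (fun i => c i == b i) (enum 'I_n) = (c == b).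
  apply/allP/eqP => [H|->]; last by move=> *.
  by apply: monoP => j; apply/eqP; apply: H; rewrite mem_enum.
case: ifP => // _; congr mon; apply: monoP => j; by rewrite ffunE mem_enum.
Qed.

End MonAct.

Section FF.
Variable K : fieldType.
Variable n : nat.
Notation PK := (P K n).
Notation op := (PK -> PK).
Implicit Types f g h : op.
Implicit Types a b c : mono n.
Notation mon := (@mon K n).
Notation P0 := (P0 K n).
Notation trip := (mono n * mono n * K)%type.

Definition Fop (s : seq trip) : op :=
  foldr (fun t acc => fadd (fscale t.2 (@Eab K n t.1.1 t.1.2)) acc) (@fzero K n) s.

Lemma inFP f : inF f <-> exists s, f = Fop s.
Proof. by []. Qed.

Lemma coFop s p a : co (Fop s p) a = \sum_(t <- s) t.2 * co (Eab t.1.1 t.1.2 p) a.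
Proof. elim: s => [|t s IH]; first by rewrite big_nil. by rewrite big_cons -IH. Qed.

Lemma coFop_mon s c a : co (Fop s (mon c)) a =
   \sum_(t <- s) (if (a == t.1.1) && (c == t.1.2) then t.2 else 0).
Proof.
rewrite coFop; apply: eq_bigr => t _; rewrite Eab_mon.
case: (c == t.1.2); rewrite ?andbT ?andbF ?comon ?co0 ?mulr0 //.
by case: (a == t.1.1); rewrite ?mulr1 ?mulr0.
Qed.

Lemma lin_Fop s : isLinEnd (Fop s).
Proof.
elim: s => [|t s IH] /=; last by apply: lin_add => //; apply: lin_scale; apply: lin_Eab.
by split=> *; apply: Peq => a; rewrite /fzero ?coadd ?coscale !co0 ?addr0 ?mulr0.
Qed.

Lemma Fop_cat s1 s2 : Fop (s1 ++ s2) = fadd (Fop s1) (Fop s2).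
Proof. apply: functional_extensionality => p; apply: Peq => a; by rewrite coadd !coFop big_cat. Qed.

Lemma inF0 : inF (@fzero K n).
Proof. by exists [::]. Qed.

Lemma inF_add f g : inF f -> inF g -> inF (fadd f g).
Proof. move=> [s1 E1] [s2 E2]; exists (s1 ++ s2); rewrite E1 E2; exact: (esym (Fop_cat s1 s2)). Qed.

Lemma inF_lin f : inF f -> isLinEnd f.
Proof. by move=> [s ->]; apply: lin_Fop. Qed.

Lemma inF_ext f s : isLinEnd f ->
  (forall c a, co (f (mon c)) a = \sum_(t <- s) (if (a == t.1.1) && (c == t.1.2) then t.2 else 0)) ->
  inF f.
Proof.
move=> Lf H; exists s; apply: lin_ext => // [|c]; first exact: lin_Fop.
by apply: Peq => a; rewrite H coFop_mon.
Qed.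

Lemma inF_scale k f : inF f -> inF (fscale k f).
Proof.
move=> [s ->]; apply: (@inF_ext _ [seq (t.1, k * t.2) | t <- s]).
  by apply: lin_scale; apply: lin_Fop.
move=> c a; rewrite /fscale coscale coFop_mon big_map mulr_sumr; apply: eq_bigr => t _ /=.
by case: ifP; rewrite ?mulr0.
Qed.

Lemma inF_xl i f : inF f -> inF (xop i \o f).
Proof.
move=> [s ->]; apply: (@inF_ext _ [seq (up i t.1.1, t.1.2, t.2) | t <- s]).
  by apply: lin_comp; [apply: lin_x|apply: lin_Fop].
move=> c a; rewrite compE cox coFop_mon big_map; case: ifP => Ha.
  by apply: eq_bigr => t _ /=; rewrite upE Ha.
by rewrite big1 // => t _ /=; rewrite upE Ha.
Qed.

Lemma inF_yl i f : inF f -> inF (yop i \o f).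
Proof.
move=> [s ->]; apply: (@inF_ext _ [seq (down i t.1.1, t.1.2, if (0 < t.1.1 i)%N then t.2 else 0) | t <- s]).
  by apply: lin_comp; [apply: lin_y|apply: lin_Fop].
move=> c a; rewrite compE coy coFop_mon big_map; apply: eq_bigr => t _ /=.
rewrite [up i a == _]eq_sym upE [a == _]eq_sym.
by case: (0 < _)%N; case: (_ == a); case: (c == _).
Qed.

Lemma inF_xr i f : inF f -> inF (f \o xop i).
Proof.
move=> [s ->]; apply: (@inF_ext _ [seq (t.1.1, down i t.1.2, if (0 < t.1.2 i)%N then t.2 else 0) | t <- s]).
  by apply: lin_comp; [apply: lin_Fop|apply: lin_x].
move=> c a; rewrite compE x_mon coFop_mon big_map; apply: eq_bigr => t _ /=.
rewrite [up i c == _]eq_sym upE [c == _]eq_sym.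
by case: (0 < _)%N; case: (_ == c); case: (a == _).
Qed.

Lemma inF_yr i f : inF f -> inF (f \o yop i).
Proof.
move=> [s ->]; apply: (@inF_ext _ [seq (t.1.1, up i t.1.2, t.2) | t <- s]).
  by apply: lin_comp; [apply: lin_Fop|apply: lin_y].
move=> c a; rewrite -/(Fop s) compE y_mon big_map; case: ifP => Hc.
  by rewrite coFop_mon; apply: eq_bigr => t _ /=; rewrite upE Hc.
rewrite (lin0 (lin_Fop s)) co0 big1 // => t _ /=; by rewrite upE Hc andbF.
Qed.

End FF.

Section Comm.
Variable K : fieldType.
Variable n : nat.
Notation PK := (P K n).
Notation op := (PK -> PK).
Implicit Types f g h : op.
Notation mon := (@mon K n).
Notation P0 := (P0 K n).

Lemma inF_compr g : inS g -> forall f, inF f -> inF (f \o g).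
Proof.
elim=> {g} [g [i [->|->]]| |g1 g2 _ H1 _ H2|k g _ H|g1 g2 _ H1 _ H2] f Hf.
- exact: inF_xr.
- exact: inF_yr.
- have -> : f \o id = f by []. done.
- have [f1 f2] := inF_lin Hf.
  have -> : f \o fadd g1 g2 = fadd (f \o g1) (f \o g2).
    by apply: functional_extensionality => p; rewrite /= /fadd f1.
  by apply: inF_add; [apply: H1|apply: H2].
- have [f1 f2] := inF_lin Hf.
  have -> : f \o fscale k g = fscale k (f \o g).
    by apply: functional_extensionality => p; rewrite /= /fscale f2.
  by apply: inF_scale; apply: H.
- have -> : f \o (g1 \o g2) = (f \o g1) \o g2 by [].
  by apply: H2; apply: H1.
Qed.

Lemma inF_compl g : inS g -> forall f, inF f -> inF (g \o f).
Proof.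
elim=> {g} [g [i [->|->]]| |g1 g2 _ H1 _ H2|k g _ H|g1 g2 _ H1 _ H2] f Hf.
- exact: inF_xl.
- exact: inF_yl.
- done.
- exact: (inF_add (H1 f Hf) (H2 f Hf)).
- exact: (inF_scale k (H f Hf)).
- exact: (H1 _ (H2 f Hf)).
Qed.

Lemma cocomm (a b : op) p x : co (comm a b p) x = co (a (b p)) x - co (b (a p)) x.
Proof. by rewrite /comm /fsub /fadd /fscale coadd coscale mulN1r. Qed.

Lemma cofadd f g p x : co (fadd f g p) x = co (f p) x + co (g p) x. Proof. by []. Qed.

Lemma comm_add (a : op) f g : isLinEnd a -> comm a (fadd f g) = fadd (comm a f) (comm a g).
Proof.
move=> [a1 a2]; apply: functional_extensionality => p; apply: Peq => x.
rewrite /fadd coadd !cocomm a1 !coadd; by rewrite opprD addrACA.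
Qed.

Lemma comm_scale (a : op) k f : isLinEnd a -> comm a (fscale k f) = fscale k (comm a f).
Proof.
move=> [a1 a2]; apply: functional_extensionality => p; apply: Peq => x.
rewrite /fscale coscale !cocomm a2 !coscale; by rewrite mulrBr.
Qed.

Lemma comm_comp (a : op) f g : isLinEnd f ->
  comm a (f \o g) = fadd (comm a f \o g) (f \o comm a g).
Proof.
move=> [f1 f2]; apply: functional_extensionality => p; apply: Peq => x.
rewrite cofadd !compE !cocomm /comm /fsub /fadd /fscale f1 f2 coadd coscale mulN1r.
by rewrite addrA subrK.
Qed.

Lemma comm_id (a : op) : comm a id = @fzero K n.
Proof. apply: functional_extensionality => p; apply: Peq => x; by rewrite cocomm subrr co0. Qed.

Lemma comm_self (a : op) : comm a a = @fzero K n.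
Proof. apply: functional_extensionality => p; apply: Peq => x; by rewrite cocomm subrr co0. Qed.

Lemma alg_gen_mono (G G' : op -> Prop) f : (forall g, G g -> G' g) -> alg_gen G f -> alg_gen G' f.
Proof.
move=> HG; elim=> {f} [f /HG H|  |f g _ Hf _ Hg|k f _ Hf|f g _ Hf _ Hg];
 [exact: ag_gen | exact: ag_id | exact: ag_add | exact: ag_scale | exact: ag_comp].
Qed.

Lemma PnS f : inPn f -> inS f.
Proof. apply: alg_gen_mono => g [i ->]; exists i; by left. Qed.

Lemma gen_S (G : op -> Prop) f : (forall g, G g -> inS g) -> alg_gen G f -> inS f.
Proof.
move=> GS; elim=> {f} [f /GS //| |f g _ Hf _ Hg|k f _ Hf|f g _ Hf _ Hg].
- exact: ag_id.
- exact: ag_add.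
- exact: ag_scale.
- exact: ag_comp.
Qed.

Lemma comm_gen (G : op -> Prop) i : (forall g, G g -> inS g) ->
  (forall g, G g -> inF (comm (xop i) g)) -> forall f, alg_gen G f -> inF (comm (xop i) f).
Proof.
move=> GS HG f Hf; elim: Hf => {f} [f /HG //| |f g Hf IHf Hg IHg|k f Hf IHf|f g Hf IHf Hg IHg].
- rewrite comm_id; exact: inF0.
- rewrite comm_add; last exact: lin_x.
  exact: inF_add.
- rewrite comm_scale; last exact: lin_x.
  exact: inF_scale.
- have Sf := gen_S GS Hf; have Sg := gen_S GS Hg.
  rewrite comm_comp; last exact: linS.
  apply: inF_add; [exact: inF_compr | exact: inF_compl].
Qed.

End Comm.

Lemma sum_pick (K : fieldType) (T : eqType) (s : seq T) (w : T -> K) b0 :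
  uniq s -> \sum_(b <- s) (if b == b0 then w b else 0) = if b0 \in s then w b0 else 0.
Proof.
elim: s => [|b s IH] /=; first by rewrite big_nil.
case/andP=> Hb Hs; rewrite big_cons IH // inE eq_sym.
case: (eqVneq b0 b) => [->|] /=; last by rewrite add0r.
by rewrite (negbTE Hb) addr0.
Qed.

Lemma sum_pick_supp (K : fieldType) (T : eqType) (s : seq T) (w : T -> K) b0 :
  uniq s -> (forall b, w b != 0 -> b \in s) ->
  \sum_(b <- s) (if b == b0 then w b else 0) = w b0.
Proof.
move=> Hu Hs; rewrite sum_pick //; case: ifP => // H.
apply/esym/eqP; apply: contraFT H => H'; exact: Hs H'.
Qed.

Section Main.
Variable K : fieldType.
Variable n : nat.
Notation PK := (P K n).
Notation op := (PK -> PK).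
Implicit Types f g h : op.
Implicit Types a b c d : mono n.
Notation mon := (@mon K n).
Notation P0 := (P0 K n).

Variable phi : op.
Hypothesis Lphi : isLinEnd phi.
Hypothesis HF : forall i, inF (comm (xop i) phi).

Definition big (M : nat) c := exists j, (M < c j)%N.

Lemma bound1 f : inF f -> exists M, forall c, big M c -> f (mon c) = P0.
Proof.
move=> [s ->]; exists (foldr (fun (t : mono n * mono n * K) m => maxn (\max_j t.1.2 j) m) 0%N s) => c [j Hj].
apply: Peq => a; rewrite -/(Fop s) coFop_mon co0 big_seq big1 // => t Ht.
case: (eqVneq c t.1.2) => [E|]; last by rewrite andbF.
exfalso; move: Hj; apply/negP; rewrite -leqNgt.
have : (t.1.2 j <= foldr (fun (t : mono n * mono n * K) m => maxn (\max_j t.1.2 j) m) 0%N s)%N.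
  apply: (@leq_trans (\max_j0 t.1.2 j0)); first exact: leq_bigmax.
  elim: (s) Ht => [|t' s' IHs] //=; rewrite inE => /orP [/eqP <-|/IHs H].
    exact: leq_maxl.
  exact: leq_trans H (leq_maxr _ _).
by rewrite -E.
Qed.

Lemma big_mono M M' c : (M <= M')%N -> big M' c -> big M c.
Proof. move=> H [j Hj]; exists j; exact: leq_ltn_trans Hj. Qed.

Lemma bound : exists M, forall i c, big M c -> comm (xop i) phi (mon c) = P0.
Proof.
have : forall L : seq 'I_n, exists M, forall i c, i \in L -> big M c -> comm (xop i) phi (mon c) = P0.
  elim=> [|i L [M HM]]; first by exists 0%N.
  have [Mi HMi] := bound1 (HF i).
  exists (maxn M Mi) => j c; rewrite inE => /orP [/eqP ->|Hj] Hc.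
    by apply: HMi; apply: big_mono Hc; rewrite leq_maxr.
  by apply: HM => //; apply: big_mono Hc; rewrite leq_maxl.
move=> /(_ (enum 'I_n)) [M HM]; exists M => i c; apply: HM; by rewrite mem_enum.
Qed.

Variable M : nat.
Hypothesis HM : forall i c, big M c -> comm (xop i) phi (mon c) = P0.

Lemma step i c : big M c -> phi (mon (up i c)) = xop i (phi (mon c)).
Proof.
move=> Hc; apply: Peq => a; have : co (comm (xop i) phi (mon c)) a = 0 by rewrite HM.
by rewrite cocomm x_mon => /eqP; rewrite subr_eq0 => /eqP ->.
Qed.

Lemma region c : big M c -> forall d a,
  co (phi (mon (addm c d))) a = if lem d a then co (phi (mon c)) (subm a d) else 0.
Proof.
move=> Hc.
suff H : forall k d, (\sum_j d j)%N = k -> forall a,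
  co (phi (mon (addm c d))) a = if lem d a then co (phi (mon c)) (subm a d) else 0.
  by move=> d; apply: (H _ d erefl).
elim=> [|k IH] d Hd a.
  have d0 : forall j, d j = 0%N.
    move=> j; apply/eqP; move/eqP: Hd; rewrite sum_nat_eq0 => /forallP /(_ j) //.
  have -> : addm c d = c by apply: monoP => j; rewrite ffunE d0 addn0.
  have -> : lem d a by apply/lemP => j; rewrite d0.
  by congr (co _); apply: monoP => j; rewrite ffunE d0 subn0.
have [i Hi] : exists i, (0 < d i)%N.
  apply/existsP; apply: contraT; rewrite negb_exists => /forallP H0.
  move: Hd; rewrite (eq_bigr (fun _ => 0%N)) ?big1 // => j _.
  by apply/eqP; rewrite -leqn0 leqNgt H0.
set d' := down i d.
have Hd' : (\sum_j d' j)%N = k.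
  have E1 : (\sum_j d j = d i + \sum_(j | j != i) d j)%N by rewrite (bigD1 i).
  have E2 : (\sum_j d' j = (d i - 1) + \sum_(j | j != i) d j)%N.
    rewrite (bigD1 i) //; congr (_ + _).
      by rewrite ffunE eqxx.
    by apply: eq_bigr => j Hj; rewrite ffunE (negbTE Hj) subn0.
  rewrite E2; nlia.
have E : addm c d = up i (addm c d').
  by apply: monoP => j; rewrite !ffunE; case: (eqVneq j i) => [->|] /=; nlia.
have Hb : big M (addm c d').
  by case: Hc => j Hj; exists j; rewrite ffunE; nlia.
rewrite E step // cox; case: ifP => Ha.
  rewrite IH //.
  have -> : lem d' (down i a) = lem d a.
    apply/lemP/lemP => H j; move: (H j); rewrite !ffunE; case: (eqVneq j i) => [->|] /=; nlia.
  congr (if _ then _ else _); congr (co _); apply: monoP => j; rewrite !ffunE.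
  case: (eqVneq j i) => [->|] /=; nlia.
have -> : lem d a = false.
  apply/negbTE/negP => /lemP /(_ i); move/negbT: Ha; nlia.
by [].
Qed.

End Main.

Section Build.
Variable K : fieldType.
Variable n : nat.
Notation PK := (P K n).
Notation op := (PK -> PK).
Implicit Types f g h : op.
Implicit Types a b c d : mono n.
Notation mon := (@mon K n).
Notation P0 := (P0 K n).

Definition Lsum (s : seq (mono n)) (w : mono n -> K) (F : mono n -> op) : op :=
  foldr (fun b acc => fadd (fscale (w b) (F b)) acc) (@fzero K n) s.

Lemma coLsum s w F p a : co (Lsum s w F p) a = \sum_(b <- s) w b * co (F b p) a.
Proof. elim: s => [|b s IH]; first by rewrite big_nil. by rewrite big_cons -IH. Qed.

Lemma fzero_gen (G : op -> Prop) : alg_gen G (@fzero K n).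
Proof.
have -> : @fzero K n = fscale 0 id.
  by apply: functional_extensionality => p; apply: Peq => a; rewrite coscale mul0r.
apply: ag_scale; exact: ag_id.
Qed.

Lemma Lsum_gen (G : op -> Prop) s w F : (forall b, alg_gen G (F b)) -> alg_gen G (Lsum s w F).
Proof.
move=> HF; elim: s => [|b s IH] /=; first exact: fzero_gen.
apply: ag_add => //; apply: ag_scale; exact: HF.
Qed.

Lemma fpow_gen (G : op -> Prop) f k : alg_gen G f -> alg_gen G (fpow f k).
Proof. move=> Hf; elim: k => [|k IH] /=; [exact: ag_id | exact: ag_comp]. Qed.

Definition xmon b : op := foldr (fun i acc => fpow (@xop K n i) (b i) \o acc) id (enum 'I_n).
Definition ymon b : op := foldr (fun i acc => fpow (@yop K n i) (b i) \o acc) id (enum 'I_n).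

Lemma xmon_Pn b : inPn (xmon b).
Proof.
rewrite /xmon; elim: (enum 'I_n) => [|i L IH] /=; first exact: ag_id.
apply: ag_comp => //; apply: fpow_gen; apply: ag_gen; by exists i.
Qed.

Lemma ymon_S b : inS (ymon b).
Proof.
rewrite /ymon; elim: (enum 'I_n) => [|i L IH] /=; first exact: ag_id.
apply: ag_comp => //; apply: fpow_gen; apply: ag_gen; exists i; by right.
Qed.

Lemma xmon_mon b c : xmon b (mon c) = mon (addm c b).
Proof.
have gen : forall L : seq 'I_n, uniq L ->
  foldr (fun i acc => fpow (@xop K n i) (b i) \o acc) id L (mon c) =
  mon [ffun j => (c j + (if j \in L then b j else 0))%N].
  elim=> [|i L IH] /=.
    by move=> _; congr mon; apply: monoP => j; rewrite ffunE addn0.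
  case/andP=> HiL HL; rewrite IH // xpow_mon; congr mon; apply: monoP => j.
  rewrite !ffunE inE; case: (eqVneq j i) => [->|] /=; last by rewrite addn0.
  by rewrite (negbTE HiL) addn0.
rewrite /xmon gen ?enum_uniq //; congr mon; apply: monoP => j; by rewrite !ffunE mem_enum.
Qed.

Lemma ymon_mon b c : ymon b (mon c) = if lem b c then mon (subm c b) else P0.
Proof.
have gen : forall L : seq 'I_n, uniq L ->
  foldr (fun i acc => fpow (@yop K n i) (b i) \o acc) id L (mon c) =
  if all (fun j => b j <= c j)%N L then mon [ffun j => (c j - (if j \in L then b j else 0))%N]
  else P0.
  elim=> [|i L IH] /=.
    by move=> _; congr mon; apply: monoP => j; rewrite ffunE subn0.
  case/andP=> HiL HL; rewrite IH //.
  case: (boolP (all _ L)) => HA; last first.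
    rewrite andbF; apply: lin0; apply: lin_fpow; exact: lin_y.
  rewrite ypow_mon !ffunE (negbTE HiL) subn0 andbT.
  case: ifP => // _; congr mon; apply: monoP => j.
  rewrite !ffunE inE; case: (eqVneq j i) => [->|] /=; last by rewrite subn0.
  by rewrite (negbTE HiL) subn0.
rewrite /ymon (gen _ (enum_uniq _)).
have -> : all (fun j => b j <= c j)%N (enum 'I_n) = lem b c.
  apply/allP/lemP => [H j|H j _]; last exact: H.
  by apply: H; rewrite mem_enum.
case: ifP => // _; congr mon; apply: monoP => j; by rewrite !ffunE mem_enum.
Qed.

Lemma addm_eq a b c : (a == addm c b) = lem c a && (b == subm a c).
Proof.
apply/eqP/andP => [->|[/lemP H /eqP ->]].
  split; first by apply/lemP => j; rewrite ffunE leq_addr.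
  by apply/eqP; apply: monoP => j; rewrite !ffunE addKn.
by apply: monoP => j; rewrite !ffunE; move: (H j); nlia.
Qed.

Lemma shift_sum s w c a : uniq s -> (forall b, w b != 0 -> b \in s) ->
  \sum_(b <- s) w b * co (mon (addm c b)) a = if lem c a then w (subm a c) else 0.
Proof.
move=> Hu Hs; under eq_bigr => b _ do rewrite comon addm_eq.
case: ifP => H /=.
  rewrite -(sum_pick_supp (subm a c) Hu Hs); apply: eq_bigr => b _.
  by case: ifP; rewrite ?mulr1 ?mulr0.
by rewrite big1 // => b _; rewrite mulr0.
Qed.

Lemma vanish_F g M : isLinEnd g -> (forall c, big M c -> g (mon c) = P0) -> inF g.
Proof.
move=> Lg Hg.
pose B := [seq [ffun i => nat_of_ord (u i)] : mono n | u : {ffun 'I_n -> 'I_M.+1} <- enum {ffun 'I_n -> 'I_M.+1}].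
have uB : uniq B.
  rewrite map_inj_uniq ?enum_uniq // => u1 u2 E; apply/ffunP => i.
  by apply: val_inj; move/ffunP: E => /(_ i); rewrite !ffunE.
have inB : forall c, ~ big M c -> c \in B.
  move=> c Hc; apply/mapP; exists [ffun i => inord (c i)]; first by rewrite mem_enum.
  apply: monoP => j; rewrite !ffunE inordK //; rewrite ltnS leqNgt; apply/negP => H.
  by apply: Hc; exists j.
have build : forall B' : seq (mono n), uniq B' -> exists L, forall c a,
    co (Fop L (mon c)) a = if c \in B' then co (g (mon c)) a else 0.
  elim=> [|c0 B' IH] /=.
    by move=> _; exists [::] => c a; rewrite coFop_mon big_nil.
  case/andP=> Hc0 /IH [L HL].
  case: (proj2_sig (g (mon c0))) => s0 Hs0.
  exists (L ++ [seq (a, c0, co (g (mon c0)) a) | a <- undup s0]) => c a.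
  rewrite Fop_cat cofadd HL coFop_mon big_map inE /=.
  case: (eqVneq c c0) => [->|Hc] /=.
    rewrite (negbTE Hc0) add0r.
    under eq_bigr => b _ do rewrite andbT [a == b]eq_sym.
    apply: sum_pick_supp; first exact: undup_uniq.
    by move=> b Hb; rewrite mem_undup; apply: Hs0.
  by rewrite big1 ?addr0 // => b _; rewrite andbF.
have [L HL] := build B uB.
exists L; apply: lin_ext => // [|c]; first exact: lin_Fop.
apply: Peq => a; rewrite -/(Fop L) HL; case: ifP => // HcB.
have : big M c by apply: NNPP => /inB; rewrite HcB.
by move=> /Hg ->; rewrite co0.
Qed.

End Build.

Section RForm.
Variable K : fieldType.
Variable n : nat.
Notation PK := (P K n).
Notation op := (PK -> PK).
Implicit Types f g h : op.
Implicit Types a b c d : mono n.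
Notation mon := (@mon K n).
Notation P0 := (P0 K n).

Variable phi : op.
Variable M : nat.
Hypothesis HM : forall i c, big M c -> comm (xop i) phi (mon c) = P0.
Variables i0 i1 : 'I_n.
Hypothesis Hi : i0 != i1.

Let reg := region HM.

Lemma big_ee (j : 'I_n) : big M (ee j M.+1).
Proof. by exists j; rewrite ffunE eqxx. Qed.

Local Notation c1 := (ee i0 M.+1).
Local Notation c2 := (ee i1 M.+1).
Local Notation q1 a := (co (phi (mon (ee i0 M.+1))) a).

Lemma addmC a b : addm a b = addm b a.
Proof. by apply: monoP => j; rewrite !ffunE addnC. Qed.

Lemma q1_van b : (b i0 <= M)%N -> q1 b = 0.
Proof.
move=> Hb.
have E1 := reg (big_ee i0) c2 (addm b c2).
have E2 := reg (big_ee i1) c1 (addm b c2).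
rewrite [addm c2 c1]addmC in E2.
have L1 : lem c2 (addm b c2) by apply/lemP => j; rewrite [X in (_ <= X)%N]ffunE leq_addl.
have L2 : lem c1 (addm b c2) = false.
  apply/negbTE/negP => /lemP /(_ i0); rewrite !ffunE eqxx (negbTE Hi) addn0.
  by rewrite ltnNge Hb.
rewrite E2 L2 L1 in E1.
have E3 : subm (addm b c2) c2 = b by apply: monoP => j; rewrite !ffunE addnK.
by rewrite E3 in E1; rewrite E1.
Qed.

Definition rr b := co (phi (mon (ee i0 M.+1))) (addm b (ee i0 M.+1)).

Lemma rform1 d a : co (phi (mon (addm c1 d))) a =
  if lem (addm c1 d) a then rr (subm a (addm c1 d)) else 0.
Proof.
rewrite reg; last exact: big_ee.
case: (boolP (lem (addm c1 d) a)) => H.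
  have -> : lem d a.
    by apply/lemP => j; move/lemP: H => /(_ j); rewrite ffunE; nlia.
  rewrite /rr; congr (co _); apply: monoP => j; move/lemP: H => /(_ j).
  rewrite !ffunE; nlia.
case: ifP => // Hd; apply: q1_van.
move: H; rewrite /lem negb_forall => /existsP [j]; rewrite !ffunE.
case: (eqVneq j i0) => [->|Hj]; first by move/lemP: Hd => /(_ i0); nlia.
by move/lemP: Hd => /(_ j); rewrite /= add0n => ->.
Qed.

Lemma rform c : big M c -> forall a,
  co (phi (mon c)) a = if lem c a then rr (subm a c) else 0.
Proof.
case=> j Hj a.
pose cj := ee j M.+1; pose d := subm c cj.
have Ec : c = addm cj d.
  by apply: monoP => k; rewrite !ffunE; case: (eqVneq k j) => [->|] /=; nlia.
have Hq : forall b, co (phi (mon cj)) b = if lem cj b then rr (subm b cj) else 0.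
  move=> b; have E1 := rform1 cj (addm b c1).
  have E2 := reg (big_ee j) c1 (addm b c1).
  rewrite [addm cj c1]addmC in E2.
  rewrite E1 in E2.
  have L : lem c1 (addm b c1) by apply/lemP => k; rewrite [X in (_ <= X)%N]ffunE leq_addl.
  have S : subm (addm b c1) c1 = b by apply: monoP => k; rewrite !ffunE addnK.
  have L2 : lem (addm c1 cj) (addm b c1) = lem cj b.
    apply/lemP/lemP => H k; move: (H k); rewrite !ffunE; nlia.
  have S2 : subm (addm b c1) (addm c1 cj) = subm b cj.
    by apply: monoP => k; rewrite !ffunE; nlia.
  rewrite L S L2 S2 in E2; exact: (esym E2).
rewrite Ec reg; last exact: big_ee.
rewrite Hq.
case: (boolP (lem d a)) => Hd.
  have -> : lem cj (subm a d) = lem (addm cj d) a.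
    apply/lemP/lemP => H k; move: (H k); move/lemP: Hd => /(_ k); rewrite !ffunE; nlia.
  case: ifP => // _; congr rr; apply: monoP => k; rewrite !ffunE; nlia.
have -> : lem (addm cj d) a = false.
  apply/negbTE; apply: contra Hd => /lemP H; apply/lemP => k; move: (H k); rewrite ffunE; nlia.
by [].
Qed.

Lemma rr_supp : finsupp rr.
Proof.
case: (proj2_sig (phi (mon c1))) => s Hs.
exists [seq subm x c1 | x <- s] => b Hb; apply/mapP; exists (addm b c1).
  exact: Hs.
by apply: monoP => k; rewrite !ffunE addnK.
Qed.

End RForm.

Section Final.
Variable K : fieldType.
Variable n : nat.
Notation PK := (P K n).
Notation op := (PK -> PK).
Implicit Types f g h : op.
Implicit Types a b c d : mono n.
Notation mon := (@mon K n).
Notation P0 := (P0 K n).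

Lemma Ekl_S k l i : inS (@Ekl K n k l i).
Proof.
apply: ag_add; last apply: ag_scale; apply: ag_comp; apply: fpow_gen; apply: ag_gen; exists i;
  by [left|right].
Qed.

Lemma Eab_S a b : inS (@Eab K n a b).
Proof.
rewrite /Eab; elim: (enum 'I_n) => [|i L IH] /=; first exact: ag_id.
apply: ag_comp => //; exact: Ekl_S.
Qed.

Lemma F_S f : inF f -> inS f.
Proof.
move=> [s ->]; elim: s => [|t s IH] /=; first exact: fzero_gen.
apply: ag_add => //; apply: ag_scale; exact: Eab_S.
Qed.

Lemma lin_comm f g : isLinEnd f -> isLinEnd g -> isLinEnd (comm f g).
Proof.
move=> Lf Lg; apply: lin_add; first exact: lin_comp.
by apply: lin_scale; apply: lin_comp.
Qed.

Lemma comm_xx i j : comm (@xop K n i) (xop j) = @fzero K n.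
Proof.
apply: lin_ext; [apply: lin_comm; exact: lin_x | exact: (lin_Fop [::]) | move=> c].
apply: Peq => a; rewrite cocomm !x_mon up_comm subrr; by [].
Qed.

Lemma comm_xy1 i : (forall j j' : 'I_n, j = j') -> inF (comm (@xop K n i) (yop i)).
Proof.
move=> H1.
apply: (@inF_ext _ _ _ [:: ([ffun => 0%N], [ffun => 0%N], -1)]).
  by apply: lin_comm; [exact: lin_x | exact: lin_y].
move=> c a; rewrite big_cons big_nil addr0 cocomm x_mon (@y_mon K n i (up i c)) ffunE eqxx /= addn1 ltn0Sn down_up.
have Ez : forall e : mono n, (e == [ffun => 0%N]) = (e i == 0%N).
  move=> e; apply/eqP/eqP => [->|He]; first by rewrite ffunE.
  by apply: monoP => j; rewrite ffunE (H1 j i).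
rewrite comon; case: (posnP (c i)) => Hc.
  have -> : c = [ffun => 0%N] by apply/eqP; rewrite Ez Hc.
  rewrite (eqxx ([ffun => 0%N] : mono n)) andbT; case: (posnP (a i)) => Ha.
    have -> : a = [ffun => 0%N] by apply/eqP; rewrite Ez Ha.
    by rewrite eqxx sub0r.
  have -> : (a == [ffun => 0%N]) = false by rewrite Ez (gtn_eqF Ha).
  have -> : (up i (down i a) == [ffun => 0%N]) = false.
    by rewrite Ez ffunE eqxx /= addn1.
  by rewrite subrr.
rewrite [c == _]Ez (gtn_eqF Hc) andbF.
case: (posnP (a i)) => Ha.
  have -> : (a == c) = false by apply/negbTE; apply/eqP => E; move: Hc; rewrite -E Ha.
  by rewrite subrr.
by rewrite up_down // subrr.
Qed.

End Final.

Unset Implicit Arguments.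

Theorem corollary6p6 (K : fieldType) (HK : [pchar K] =i pred0) (n : nat)
    (hn : (0 < n)%N) (phi : P K n -> P K n) :
  (isLinEnd phi /\ forall i : 'I_n, inF (comm (xop i) phi)) <->
  (if n == 1%N then inS phi else inPF phi).
Proof.
split.
- move=> [Lphi HF]; have [M HM] := bound HF.
  pose i0 : 'I_n := Ordinal hn.
  case: ifP => Hn.
  + move/eqP: Hn => En.
    pose cc := ee i0 M.+1.
    have Hcc : big M cc by exists i0; rewrite ffunE eqxx.
    pose q := co (phi (mon K cc)).
    have [sq Hsq] : exists sq, uniq sq /\ forall b, q b != 0 -> b \in sq.
      case: (proj2_sig (phi (mon K cc))) => s Hs; exists (undup s).
      by split; [exact: undup_uniq | move=> b Hb; rewrite mem_undup; exact: Hs].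
    pose Q := Lsum sq q (fun b => xmon b \o ymon cc).
    have QS : inS Q.
      apply: Lsum_gen => b; apply: ag_comp; [apply: PnS; exact: xmon_Pn | exact: ymon_S].
    pose g := fsub phi Q.
    have Lg : isLinEnd g by apply: lin_add => //; apply: lin_scale; apply: linS.
    have Hg : inF g.
      apply: (@vanish_F _ _ g M Lg) => c [j Hj].
      have Hj0 : j = i0 by apply: val_inj => /=; have := ltn_ord j; nlia.
      have Hlc : lem cc c.
        apply/lemP => k; rewrite ffunE; case: (eqVneq k i0) => [->|_]; last by [].
        by rewrite -Hj0.
      apply: Peq => a; rewrite /g /fsub cofadd /fscale coscale co0 coLsum.
      under eq_bigr => b _ do rewrite compE ymon_mon Hlc xmon_mon.
      rewrite shift_sum; try by case: Hsq.
      have Ec : c = addm cc (subm c cc).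
        by apply: monoP => k; move/lemP: Hlc => /(_ k); rewrite !ffunE; nlia.
      rewrite {1}Ec (region HM Hcc) -/q mulN1r subrr; by [].
    have -> : phi = fadd Q g.
      apply: functional_extensionality => p; apply: Peq => a.
      by rewrite cofadd /g /fsub cofadd /fscale coscale mulN1r addrC subrK.
    apply: ag_add => //; exact: F_S.
  + have h1 : (1 < n)%N by case: n hn Hn phi Lphi HF M HM i0 => [|[|m]].
    pose i1 : 'I_n := Ordinal h1.
    have Hi : i0 != i1 by [].
    pose r := rr phi M i0.
    have [sr Hsr] : exists sr, uniq sr /\ forall b, r b != 0 -> b \in sr.
      case: (rr_supp phi M i0) => s Hs; exists (undup s).
      by split; [exact: undup_uniq | move=> b Hb; rewrite mem_undup; exact: Hs].
    pose Mr := Lsum sr r (@xmon K n).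
    have MP : inPn Mr by apply: Lsum_gen => b; exact: xmon_Pn.
    pose g := fsub phi Mr.
    have Lg : isLinEnd g by apply: lin_add => //; apply: lin_scale; apply: linPn.
    have Hg : inF g.
      apply: (@vanish_F _ _ g M Lg) => c Hc.
      apply: Peq => a; rewrite /g /fsub cofadd /fscale coscale co0 coLsum.
      under eq_bigr => b _ do rewrite xmon_mon.
      rewrite shift_sum; try by case: Hsr.
      rewrite (rform HM Hi Hc) -/r mulN1r subrr; by [].
    exists Mr, g; split => //; split => //.
    apply: functional_extensionality => p; apply: Peq => a.
    by rewrite cofadd /g /fsub cofadd /fscale coscale mulN1r addrC subrK.
- case: ifP => Hn.
  + move=> HS; split; first exact: linS.
    move=> i; apply: (comm_gen _ _ HS) => [g Hg|g [j [->|->]]]; first exact: ag_gen.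
    * rewrite comm_xx; exact: inF0.
    * have H1 : forall j j' : 'I_n, j = j'.
        move/eqP: Hn => En j1 j2; apply: val_inj => /=.
        have := ltn_ord j1; have := ltn_ord j2; nlia.
      rewrite (H1 j i); exact: comm_xy1.
  + move=> [p [f [Hp [Hf ->]]]]; split.
      apply: lin_add; [exact: linPn | exact: inF_lin].
    move=> i; rewrite comm_add; last exact: lin_x.
    apply: inF_add.
      apply: (comm_gen _ _ Hp) => [g [j ->]|g [j ->]].
        by apply: ag_gen; exists j; left.
      rewrite comm_xx; exact: inF0.
    apply: inF_add; first exact: inF_xl.
    apply: inF_scale; exact: inF_xr.
Qed.
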